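(* Let $\mathcal{U}=\{1,\dots,N\}$ be a finite set of domains organized by a domain taxonomy $\mathcal{T}$ with associated domain distance matrix $\mathbf{A}$ (defined in the context). Let $(\mathbf{x},u)$ be distributed according to the data distribution $p(\mathbf{x},u)$, where each domain is equally likely, $p(u=i)=1/N$. Let $E$ be an encoder producing encodings $\mathbf{e}=E(\mathbf{x},u,\mathbf{A})$, and let $T:\mathcal{Z}\times\mathcal{Z}\to\mathbb{R}$ be any taxonomist function, with taxonomist loss $$L_t(T,E)=\mathbb{E}\big[(T(\mathbf{e}_1,\mathbf{e}_2)-\mathbf{A}_{u_1,u_2})^2\big],$$ the expectation being over two i.i.d. samples $(\mathbf{x}_1,u_1),(\mathbf{x}_2,u_2)\sim p(\mathbf{x},u)$ with $\mathbf{e}_k=E(\mathbf{x}_k,u_k,\mathbf{A})$. If the encoding is independent of the domain, $\mathbf{e}\perp u$, then $$L_t(T,E)=0 \implies \mathbf{A}_{ij}=a \text{ for all } i\neq j\in\mathcal{U}$$ for some constant $a\in\mathbb{Z}_{>0}$.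
   Context: A domain taxonomy over $\mathcal{U}=\{1,\dots,N\}$ is a rooted directed tree whose root node is $\mathcal{U}$, in which each parent node $\mathcal{U}_p\subseteq\mathcal{U}$ is split into disjoint child nodes whose union is $\mathcal{U}_p$, and each leaf node contains exactly one domain $\{u\}$. The domain distance matrix $\mathbf{A}\in\mathbb{Z}_{\ge 0}^{N\times N}$ has $\mathbf{A}_{ij}$ equal to the shortest-path distance in the taxonomy tree between the leaves $\{i\}$ and $\{j\}$. A taxonomy is called non-informative if $\mathbf{A}_{ij}=a$ for all $i\neq j$ for some constant $a\in\mathbb{Z}_{>0}$. The encoding space is denoted $\mathcal{Z}$. The assumption that each domain has the same amount of data, $p(u=i)=1/N$, is a standing assumption of the paper. *)

(* Defs.v *)
From HB Require Import structures.
From mathcomp Require Import all_boot all_order all_algebra.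
From mathcomp Require Import all_classical all_reals all_analysis.

Set Implicit Arguments.
Unset Strict Implicit.
Unset Printing Implicit Defensive.

Import Order.TTheory GRing.Theory Num.Theory.
Local Open Scope ring_scope.

(* A rooted directed tree on a finite node type V, given by a parent    *)
(* map (parent root = root), each node labelled by a subset of U.       *)

Section Taxonomy.
Variables (N : nat) (V : finType) (root : V) (parent : V -> V)
  (label : V -> {set 'I_N}).

Definition children (p : V) : {set V} :=
  [set c | (c != root) && (parent c == p)].

Definition is_taxonomy : Prop :=
  [/\ parent root = root,
      (forall v, exists k, iter k parent v = root),
      label root = [set: 'I_N]%SET,
      (forall p, children p != finset.set0 ->
         label p = \bigcup_(c in children p) label c /\
         (forall c1 c2, c1 \in children p -> c2 \in children p ->
            c1 != c2 -> [disjoint label c1 & label c2])) &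
      (forall v, children v = finset.set0 -> exists u, label v = [set u]%SET)].

Definition tree_adj : rel V :=
  fun v w => ((v != root) && (parent v == w)) || ((w != root) && (parent w == v)).

Definition walk_len (v w : V) (n : nat) : Prop :=
  exists s : seq V, [/\ path tree_adj v s, last v s = w & size s = n].

Definition leaf_of (v : V) (i : 'I_N) : Prop :=
  children v = finset.set0 /\ label v = [set i]%SET.

Definition is_domain_distance_matrix (A : 'I_N -> 'I_N -> nat) : Prop :=
  forall i j v w, leaf_of v i -> leaf_of w j ->
    walk_len v w (A i j) /\ (forall n, walk_len v w n -> (A i j <= n)%N).

End Taxonomy.

(* Data distribution p(x,u) on X * 'I_N with p(u = i) = 1/N:            *)
(* p = sum_i (1/N) (P i (x) delta_i), where P i = p(x | u = i).          *)

Section Data.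
Local Open Scope classical_set_scope.
Local Open Scope ereal_scope.
Variables (d : measure_display) (X : measurableType d) (R : realType) (N : nat)
  (P : 'I_N -> probability X R).

Definition data_prob (S : set (X * 'I_N)) : \bar R :=
  \sum_(i < N) ((N%:R)^-1)%:E * P i [set x | S (x, i)].

Definition enc_indep_domain (dZ : measure_display) (Z : measurableType dZ)
  (E : X -> 'I_N -> Z) : Prop :=
  forall (B : set Z) (i : 'I_N), measurable B ->
    data_prob [set xu | B (E xu.1 xu.2) /\ xu.2 = i]
    = data_prob [set xu | B (E xu.1 xu.2)] * data_prob [set xu | xu.2 = i].

Definition taxonomist_loss (dZ : measure_display) (Z : measurableType dZ)
  (E : X -> 'I_N -> Z) (T : Z -> Z -> R) (A : 'I_N -> 'I_N -> nat) : \bar R :=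
  \sum_(i < N) \sum_(j < N)
    ((N%:R)^-1 * (N%:R)^-1)%:E *
    \int[(P i \x P j)%E]_(z in [set: X * X])
        (((T (E z.1 i) (E z.2 j) - (A i j)%:R) ^+ 2)%R)%:E.

End Data.

(* Main.v *)
Require Import Defs.
From HB Require Import structures.
From mathcomp Require Import all_boot all_order all_algebra.
From mathcomp Require Import all_classical all_reals all_analysis.
Import Order.TTheory GRing.Theory Num.Theory.
Local Open Scope classical_set_scope.
Local Open Scope ring_scope.
From mathcomp Require Import measurable_realfun zify.
Lemma leaf_exists (N : nat) (V : finType) (root : V) (parent : V -> V)
  (label : V -> {set 'I_N}) :
  is_taxonomy root parent label -> forall i : 'I_N, exists v, leaf_of root parent label v i.
Proof.
case=> proot reach lroot split leaf i.
have reachb : forall v, exists k, iter k parent v == root.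
  by move=> v; have [k hk] := reach v; exists k; apply/eqP.
pose depth v := ex_minn (reachb v).
have dlt : forall p c, c \in children root parent p -> (depth p < depth c)%N.
  move=> p c; rewrite inE => /andP[cnr /eqP pc].
  rewrite /depth; case: ex_minnP => m _ hm; case: ex_minnP => k hk _.
  case: k hk => [|k]; first by move=> /= /eqP ce; rewrite ce eqxx in cnr.
  by rewrite iterSr pc => /hm.
pose Mx := (\max_(w : V) depth w)%N.
have dle : forall w, (depth w <= Mx)%N by move=> w; exact: (leq_bigmax w).
suff: forall n v, (Mx - depth v <= n)%N -> i \in label v -> exists v, leaf_of root parent label v i.
  by move/(_ Mx root); apply; [rewrite leq_subr | rewrite lroot inE].
elim=> [|n IH] v hn iv;
  (have [c0|cn] := eqVneq (children root parent v) finset.set0;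
  [ have [u hu] := leaf _ c0; exists v; split => //;
    by move: iv; rewrite hu inE => /eqP -> | ]);
  have [lv _] := split _ cn;
  move: iv; rewrite lv => /bigcupP [c cc ic]; have := dlt _ _ cc; have := dle c.
- lia.
- move=> h1 h2; apply: (IH c) => //; lia.
Qed.

Lemma indep_eq (N : nat) (R : realType) (d : measure_display) (X : measurableType d)
  (dZ : measure_display) (Z : measurableType dZ)
  (P : 'I_N -> probability X R) (E : X -> 'I_N -> Z) :
  enc_indep_domain P E -> forall B : set Z, measurable B -> forall i,
  P i [set x | B (E x i)] = (\sum_(k < N) ((N%:R)^-1)%:E * P k [set x | B (E x k)])%E.
Proof.
move=> hind B mB i; have := hind B i mB; rewrite /data_prob /=.
have T1 : (\sum_(k < N) ((N%:R)^-1)%:E * P k [set _ | k = i] = ((N%:R)^-1)%:E)%E.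
  rewrite (bigD1 i) //= big1; last first.
    move=> k ki; rewrite (_ : [set x | _] = set0) ?measure0 ?mule0 //.
    by apply/funext => x /=; apply/propext; split => // kie; rewrite kie eqxx in ki.
  rewrite (_ : [set x | i = i] = setT); last by apply/funext => x; apply/propext.
  by rewrite probability_setT mule1 adde0.
rewrite T1 (bigD1 i) //= big1; last first.
  move=> k ki; rewrite (_ : [set x | _] = set0) ?measure0 ?mule0 //.
  by apply/funext => x /=; apply/propext; split => // -[_ kie]; rewrite kie eqxx in ki.
rewrite adde0.
rewrite (_ : [set x | B (E x i) /\ i = i] = [set x | B (E x i)]); last first.
  by apply/funext => x; apply/propext; split => [[]|].
have N0 : (0 < N)%N by apply: leq_ltn_trans (ltn_ord i).
set S := (\sum_(_ < _) _)%E => h.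
have : (N%:R%:E * (((N%:R)^-1)%:E * P i [set x | B (E x i)]) = N%:R%:E * (S * ((N%:R)^-1)%:E))%E by rewrite h.
rewrite muleA -EFinM mulfV ?pnatr_eq0 -?lt0n // mul1e muleC -muleA -EFinM mulVf ?pnatr_eq0 -?lt0n //.
by rewrite mule1.
Qed.

Section S.
Variables (N : nat) (R : realType) (d : measure_display) (X : measurableType d)
  (dZ : measure_display) (Z : measurableType dZ)
  (P : 'I_N -> probability X R) (E : X -> 'I_N -> Z) (T : Z -> Z -> R).
Hypothesis mE : forall i, measurable_fun [set: X] (E ^~ i).
Hypothesis mT : measurable_fun [set: Z * Z] (fun z : Z * Z => T z.1 z.2).
Hypothesis hind : enc_indep_domain P E.

Definition Bad i j (c : R) := [set z : X * X | T (E z.1 i) (E z.2 j) != c].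

Lemma mfij i j : measurable_fun [set: X * X] (fun z : X * X => T (E z.1 i) (E z.2 j)).
Proof.
apply: (measurableT_comp (f := fun z : Z * Z => T z.1 z.2) (g := fun z : X * X => (E z.1 i, E z.2 j)) mT).
apply: measurable_fun_pair.
  exact: (measurableT_comp (mE i) measurable_fst).
exact: (measurableT_comp (mE j) measurable_snd).
Qed.

Lemma mset1C (c : R) : measurable [set x : R | x != c].
Proof.
rewrite (_ : [set x | x != c] = ~` [set c]); first by apply: measurableC; exact: measurable_set1.
by apply/funext => x; apply/propext; split => /eqP.
Qed.

Lemma mBad i j c : measurable (Bad i j c).
Proof.
by have := mfij i j measurableT _ (mset1C c); rewrite setTI.
Qed.

Lemma swap2 i j l c : ((P i \x P j) (Bad i j c) = (P i \x P l) (Bad i l c))%E.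
Proof.
rewrite /product_measure1; apply: eq_integral => x _ /=.
have mB : measurable [set z2 | T (E x i) z2 != c].
  by have := measurable_fun_pair2 (E x i) mT measurableT (mset1C c); rewrite setTI.
have xs k : xsection (Bad i k c) x = [set y | [set z2 | T (E x i) z2 != c] (E y k)].
  by apply/funext => y; rewrite /xsection /Bad /=; apply/propext; rewrite in_setE.
by rewrite !xs !(@indep_eq _ _ _ _ _ _ P E hind _ mB).
Qed.

Lemma swap1 i j k c : ((P i \x P j) (Bad i j c) = (P k \x P j) (Bad k j c))%E.
Proof.
have uq a : ((P a \x P j) (Bad a j c) = \int[P j]_y P a (ysection (Bad a j c) y))%E.
  rewrite (product_measure_unique (m' := (P a \x^ P j)%E)) //; last exact: mBad.
  move=> A B mA mB; exact: product_measure2E.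
rewrite !uq; apply: eq_integral => y _ /=.
have mB : measurable [set z1 | T z1 (E y j) != c].
  by have := measurable_fun_pair1 (E y j) mT measurableT (mset1C c); rewrite setTI.
have ys a : ysection (Bad a j c) y = [set x | [set z1 | T z1 (E y j) != c] (E x a)].
  by apply/funext => x; rewrite /ysection /Bad /=; apply/propext; rewrite in_setE.
by rewrite !ys !(@indep_eq _ _ _ _ _ _ P E hind _ mB).
Qed.


Lemma G0 (A : 'I_N -> 'I_N -> nat) : taxonomist_loss P E T A = 0%E ->
  forall i j, ((P i \x P j) (Bad i j (A i j)%:R) = 0)%E.
Proof.
move=> loss i j.
pose f := fun z : X * X => (((T (E z.1 i) (E z.2 j) - (A i j)%:R) ^+ 2)%:E).
have mf : measurable_fun [set: X * X] (fun z : X * X => (((T (E z.1 i) (E z.2 j) - (A i j)%:R) ^+ 2)%:E : \bar R)).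
  apply/measurable_EFinP; apply: measurable_funX; apply: measurable_funB.
    exact: mfij.
  exact: measurable_cst.
set c := (N%:R^-1 * N%:R^-1) : R.
have c0 : (0 <= c) by rewrite /c mulr_ge0 // invr_ge0 ler0n.
have cn0 : c != 0.
  have N0 : (0 < N)%N by apply: leq_ltn_trans (ltn_ord i).
  by rewrite /c mulf_neq0 // invr_eq0 pnatr_eq0 -lt0n.
have t_ge0 a b : (0 <= (c%:E * \int[(P a \x P b)%E]_(z in [set: X * X])
        (((T (E z.1 a) (E z.2 b) - (A a b)%:R) ^+ 2)%R)%:E))%E.
  apply: mule_ge0; first by rewrite lee_fin.
  by apply: integral_ge0 => z _; rewrite lee_fin sqr_ge0.
have hint : (\int[(P i \x P j)%E]_(z in [set: X * X]) f z = 0)%E.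
  move: loss; rewrite /taxonomist_loss => /eqP.
  rewrite seq_psume_eq0; last by move=> a _; apply: sume_ge0 => b _; exact: t_ge0.
  move=> /allP /(_ i (mem_index_enum _)) /= /eqP /eqP.
  rewrite seq_psume_eq0; last by move=> b _; exact: t_ge0.
  move=> /allP /(_ j (mem_index_enum _)) /=.
  by rewrite mule_eq0 eqe (negbTE cn0) /= => /eqP.
have habs : (\int[(P i \x P j)%E]_(z in [set: X * X]) `|f z| = 0)%E.
  rewrite -hint; apply: eq_integral => z _; by rewrite gee0_abs // lee_fin sqr_ge0.
have [Nn [mNn Nn0 sub]] := (ae_eq_integral_abs _ measurableT mf).1 habs.
apply/eqP; rewrite -measure_le0 -Nn0; apply: le_measure; rewrite ?inE //.
  exact: mBad.
move=> z /= hz; apply: sub => /= /(_ I) /eqP.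
by rewrite /f eqe sqrf_eq0 subr_eq0 (negbTE hz).
Qed.

Lemma Aeq (A : 'I_N -> 'I_N -> nat) : taxonomist_loss P E T A = 0%E ->
  forall i j k l, A i j = A k l.
Proof.
move=> loss i j k l; apply/eqP/negPn/negP => ne.
set a : R := (A i j)%:R; set b : R := (A k l)%:R.
have ab : a != b by rewrite /a /b eqr_nat.
have h1 := G0 _ loss k l.
have h2 : ((P k \x P l) (Bad k l a) = 0)%E.
  by rewrite -(swap1 i l k) -(swap2 i j l); exact: G0.
have : ((P k \x P l) setT <= (P k \x P l) (Bad k l a) + (P k \x P l) (Bad k l b))%E.
  apply: le_trans (measureU2 _ (mBad _ _ _) (mBad _ _ _)).
  apply: le_measure; rewrite ?inE //; first exact: measurableU (mBad _ _ _) (mBad _ _ _).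
  move=> z _ /=; have [ha|ha] := eqVneq (T (E z.1 k) (E z.2 l)) a; last by left.
  by right; rewrite /Bad /= ha.
by rewrite probability_setT h1 h2 adde0 lee_fin ler10.
Qed.

End S.


Theorem theorem4p1 (N : nat) (V : finType) (root : V) (parent : V -> V)
  (label : V -> {set 'I_N}) (A : 'I_N -> 'I_N -> nat)
  (R : realType) (d : measure_display) (X : measurableType d)
  (dZ : measure_display) (Z : measurableType dZ)
  (P : 'I_N -> probability X R)
  (E : X -> 'I_N -> Z) (T : Z -> Z -> R) :
  is_taxonomy root parent label ->
  is_domain_distance_matrix root parent label A ->
  (forall i, measurable_fun [set: X] (E ^~ i)) ->
  measurable_fun [set: Z * Z] (fun z : Z * Z => T z.1 z.2) ->
  enc_indep_domain P E ->
  taxonomist_loss P E T A = 0%E ->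
  exists a : nat, (0 < a)%N /\ (forall i j : 'I_N, i != j -> A i j = a).
Proof.
move=> tax dist mE mT hind loss.
have [N1|N2] := leqP N 1.
  exists 1%N; split => // i j /eqP[]; apply/val_inj => /=.
  have := ltn_ord i; have := ltn_ord j; lia.
pose i0 : 'I_N := Ordinal (ltnW N2).
pose j0 : 'I_N := Ordinal N2.
have Ae := @Aeq _ _ _ _ _ _ P E T mE mT hind A loss.
exists (A i0 j0); split; last by move=> i j _; exact: Ae.
rewrite lt0n; apply/negP => /eqP A0.
have [v lv] := leaf_exists _ _ _ _ _ tax i0; have [w lw] := leaf_exists _ _ _ _ _ tax j0.
have [[s [_ hl hs]] _] := dist _ _ _ _ lv lw.
rewrite A0 in hs; move/eqP: hs; rewrite size_eq0 => /eqP sE.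
rewrite sE /= in hl; subst w.
have := lv.2; rewrite lw.2 => /setP /(_ i0); rewrite !inE eqxx => /eqP/(congr1 val).
by [].
Qed.
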